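(* With respect to the set of pure Nash equilibrium outcomes, the mechanism $\mathcal{CUDD}$ satisfies symmetry, invariance with respect to repetition of alternatives (IRA), and existence of a Pareto efficient equilibrium (for every collection $A$, some pure Nash equilibrium outcome of $\Gamma_{\mathcal{CUDD}}(A)$ is Pareto efficient).
   Context: Two players bargain over a collection (multiset) $A=(a^k)_{k\in[n]}$, $a^k\in[0,1]^2$, $a^k_i$ being player $i$'s utility; players are risk neutral and outcomes are expected-utility vectors; $NEO(A)$ denotes the set of pure Nash equilibrium outcomes. Mechanism $\mathcal{CUDD}$: each player $i$ submits $(g_i,d_i)\in[n]^2$; if $g_1=g_2$ the chosen index is $g_1$, otherwise it is uniform over $\{d_1,d_2\}$. Symmetry: a collection is symmetric if for all $x_1,x_2$, $|\{k:a^k=(x_1,x_2)\}|=|\{k:a^k=(x_2,x_1)\}|$; the mechanism is symmetric if $NEO(A)$ is closed under swapping coordinates for every symmetric $A$. IRA: for $j\in[n]$ let $(A,j)=(a_1,\dots,a_n,a_j)$; IRA means $NEO(A)=NEO((A,j))$ for all $A,j$. An outcome $x$ is Pareto efficient if there is no $a\in A$ with $a_1>x_1$ and $a_2>x_2$. *)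

(* Defs.v *)
From mathcomp Require Import all_boot all_order all_algebra.
From mathcomp Require Import reals.
Set Implicit Arguments. Unset Strict Implicit. Unset Printing Implicit Defensive.
Import Order.TTheory GRing.Theory Num.Theory.
Local Open Scope ring_scope.

Section CUDD.
Variable R : realType.

(* A collection (multiset) of n alternatives, indexed by 'I_n;
   (A k).1 / (A k).2 are the utilities of players 1 / 2. *)
Definition collection (n : nat) := 'I_n -> R * R.

Definition in_unit_square n (A : collection n) : Prop :=
  forall k, 0 <= (A k).1 <= 1 /\ 0 <= (A k).2 <= 1.

Definition strategy (n : nat) := ('I_n * 'I_n)%type.

(* Expected value of the utility f under CUDD at profile (s1, s2):
   if g1 = g2 the alternative g1 is chosen, otherwise the index is uniform
   over the set {d1, d2}. *)
Definition cudd_eu n (A : collection n) (f : R * R -> R)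
    (s1 s2 : strategy n) : R :=
  if s1.1 == s2.1 then f (A s1.1)
  else (\sum_(k in [set s1.2; s2.2]) f (A k)) / (#|[set s1.2; s2.2]|)%:R.

Definition cudd_outcome n (A : collection n) (s1 s2 : strategy n) : R * R :=
  (cudd_eu A fst s1 s2, cudd_eu A snd s1 s2).

Definition is_pure_NE n (A : collection n) (s1 s2 : strategy n) : Prop :=
  (forall t1 : strategy n, (cudd_outcome A t1 s2).1 <= (cudd_outcome A s1 s2).1) /\
  (forall t2 : strategy n, (cudd_outcome A s1 t2).2 <= (cudd_outcome A s1 s2).2).

Definition NEO n (A : collection n) (x : R * R) : Prop :=
  exists s1 s2 : strategy n, is_pure_NE A s1 s2 /\ x = cudd_outcome A s1 s2.

Definition symmetric_collection n (A : collection n) : Prop :=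
  forall x1 x2 : R,
    #|[set k | A k == (x1, x2)]| = #|[set k | A k == (x2, x1)]|.

Definition repeat_alt n (A : collection n) (j : 'I_n) : collection n.+1 :=
  fun k => if unlift ord_max k is Some k' then A k' else A j.

Definition swap_outcome (x : R * R) : R * R := (x.2, x.1).

Definition pareto_efficient n (A : collection n) (x : R * R) : Prop :=
  ~ exists k, x.1 < (A k).1 /\ x.2 < (A k).2.

End CUDD.

(* Main.v *)
Require Import Defs.
From mathcomp Require Import all_boot all_order all_algebra.
From mathcomp Require Import reals lra.
Import Order.TTheory GRing.Theory Num.Theory.
Local Open Scope ring_scope.
Set Implicit Arguments. Unset Strict Implicit.

Section S.
Variable R : realType.

Lemma exists_max (T : finType) (P : pred T) (F : T -> R) :
  (exists i, P i) -> exists i, P i /\ forall j, P j -> F j <= F i.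
Proof.
case=> i0 Pi0; case: (arg_maxP F Pi0) => i Pi H.
by exists i; split.
Qed.

Lemma eu_E n (A : collection R n) f s1 s2 :
  cudd_eu A f s1 s2 = if s1.1 == s2.1 then f (A s1.1)
                      else (f (A s1.2) + f (A s2.2)) / 2.
Proof.
rewrite /cudd_eu; case: ifP => // _.
have [->|ne] := eqVneq s1.2 s2.2.
  rewrite setUid big_set1 cards1; lra.
rewrite big_setU1 ?inE ?ne //= big_set1 cards2 ne.
done.
Qed.

Definition good n (A : collection R n) g := exists b1 b2, forall a,
  (A a).1 + (A b1).1 <= 2 * (A g).1 /\ (A a).2 + (A b2).2 <= 2 * (A g).2.

Definition Char n (A : collection R n) (x : R * R) :=
  (exists g, good A g /\ x = A g) \/
  (exists d1 d2, d1 != d2 /\ (forall a, (A a).1 <= (A d1).1) /\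
     (forall a, (A a).2 <= (A d2).2) /\
     x = (((A d1).1 + (A d2).1)/2, ((A d1).2 + (A d2).2)/2)).

Lemma NEO_char n (A : collection R n) x : NEO A x <-> Char A x.
Proof.
split.
- case=> [[g1 d1]] [[g2 d2]] [[H1 H2] ->].
  rewrite /cudd_outcome !eu_E /=.
  have [e|ne] := eqVneq g1 g2; first subst g2.
    left; exists g1; split; last by case: (A g1).
    case: (pickP (fun g' => g' != g1)) => [g' ng|all].
      exists d2, d1 => a; split.
        have := H1 (g', a); rewrite /cudd_outcome !eu_E /= (negbTE ng) eqxx /=.
        lra.
      have := H2 (g', a); rewrite /cudd_outcome !eu_E /= eq_sym (negbTE ng) eqxx /=.
      lra.
    exists g1, g1 => a; have := all a; rewrite /= => /negbFE/eqP ->; lra.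
  have M1 : forall a, (A a).1 <= (A d1).1.
    move=> a; have := H1 (g1, a); rewrite /cudd_outcome !eu_E /= (negbTE ne) /=; lra.
  have M2 : forall a, (A a).2 <= (A d2).2.
    move=> a; have := H2 (g2, a); rewrite /cudd_outcome !eu_E /= (negbTE ne) /=; lra.
  have [ed|nd] := eqVneq d1 d2.
    left; exists d1; split.
      exists d1, d1 => a; split; [have := M1 a|have := M2 a; rewrite -ed]; lra.
    rewrite -ed; case: (A d1) => p q /=; congr (_, _); lra.
  right; exists d1, d2; do !split => //.
- case=> [[g [[b1 [b2 H]] ->]]|[d1 [d2 [nd [M1 [M2 ->]]]]]].
  + exists (g, b2), (g, b1); split; last by rewrite /cudd_outcome !eu_E /= eqxx; case: (A g).
    split.
      move=> t1; rewrite /cudd_outcome !eu_E /= eqxx.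
      case: eqP => [->|_]; first lra.
      have := H t1.2; lra.
    move=> t2; rewrite /cudd_outcome !eu_E /= eqxx.
    case: eqP => _; first lra.
    have := H t2.2; lra.
  + exists (d1, d1), (d2, d2); split; last by rewrite /cudd_outcome !eu_E /= (negbTE nd).
    split.
      move=> t1; rewrite /cudd_outcome !eu_E /= (negbTE nd).
      case: eqP => [->|_]; first by have := M1 d2; lra.
      have := M1 t1.2; lra.
    move=> t2; rewrite /cudd_outcome !eu_E /= (negbTE nd).
    case: eqP => _; first by have := M2 d1; lra.
    have := M2 t2.2; lra.
Qed.


Lemma transfer n m (A : collection R n) (B : collection R m) x :
  (forall k, exists k', B k' = A k) -> (forall k', exists k, B k' = A k) ->
  Char A x -> Char B x.
Proof.
move=> HAB HBA [[g [[b1 [b2 H]] ->]]|[d1 [d2 [nd [M1 [M2 ->]]]]]].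
  have [g' eg] := HAB g; have [b1' e1] := HAB b1; have [b2' e2] := HAB b2.
  left; exists g'; split; last by rewrite eg.
  exists b1', b2' => a'; have [a ea] := HBA a'.
  by rewrite ea eg e1 e2; apply: H.
have [e1 ee1] := HAB d1; have [e2 ee2] := HAB d2.
have M1' : forall a', (B a').1 <= (B e1).1.
  by move=> a'; have [a ->] := HBA a'; rewrite ee1.
have M2' : forall a', (B a').2 <= (B e2).2.
  by move=> a'; have [a ->] := HBA a'; rewrite ee2; exact: M2.
have [e|ne] := eqVneq e1 e2.
  subst e2; left; exists e1; split.
    exists e1, e1 => a; split; [have := M1' a|have := M2' a]; lra.
  rewrite -ee1 -ee2; case: (B e1) => p q /=; congr (_, _); lra.
right; exists e1, e2; do !split => //; by rewrite ee1 ee2.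
Qed.

Lemma transfer_sw n (A : collection R n) x :
  (forall k, exists k', A k' = swap_outcome (A k)) ->
  Char A x -> Char A (swap_outcome x).
Proof.
move=> HAB.
have HBA : forall k', exists k, A k' = swap_outcome (A k).
  move=> k'; have [k ek] := HAB k'; exists k; rewrite ek /swap_outcome /=.
  by case: (A k').
case=> [[g [[b1 [b2 H]] ->]]|[d1 [d2 [nd [M1 [M2 ->]]]]]].
  have [g' eg] := HAB g; have [b1' e1] := HAB b1; have [b2' e2] := HAB b2.
  left; exists g'; split; last by rewrite eg.
  exists b2', b1' => a'; have [a ea] := HBA a'.
  rewrite ea eg e1 e2 /=; have [h1 h2] := H a; split => //.
have [e1 ee1] := HAB d1; have [e2 ee2] := HAB d2.
have M1' : forall a', (A a').2 <= (A e1).2.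
  by move=> a'; have [a ->] := HBA a'; rewrite ee1; exact: M1.
have M2' : forall a', (A a').1 <= (A e2).1.
  by move=> a'; have [a ->] := HBA a'; rewrite ee2; exact: M2.
have [e|ne] := eqVneq e1 e2.
  subst e2; left; exists e1; split.
    exists e1, e1 => a; split; [have := M2' a|have := M1' a]; lra.
  rewrite ee1; move: ee2; rewrite ee1 /swap_outcome; case: (A d1) => p q; case: (A d2) => p2 q2 /= [-> ->]; congr (_, _); lra.
right; exists e2, e1; do !split => //.
  by rewrite eq_sym.
rewrite /swap_outcome /= ee1 ee2 /=; congr (_, _); lra.
Qed.

End S.

Theorem corollary3 (R : realType) :
  (* symmetry *)
  (forall (n : nat) (A : collection R n),
      in_unit_square A -> symmetric_collection A ->
      forall x, NEO A x -> NEO A (swap_outcome x)) /\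
  (* IRA *)
  (forall (n : nat) (A : collection R n) (j : 'I_n),
      in_unit_square A ->
      forall x, NEO A x <-> NEO (repeat_alt A j) x) /\
  (* existence of a Pareto efficient equilibrium (nonempty collections) *)
  (forall (n : nat) (A : collection R n.+1),
      in_unit_square A ->
      exists x, NEO A x /\ pareto_efficient A x).
Proof.
split; [|split].
- move=> n A _ HS x /NEO_char Hx; apply/NEO_char; apply: transfer_sw Hx => k.
  have := HS (A k).1 (A k).2.
  have kin : k \in [set i | A i == ((A k).1, (A k).2)].
    by rewrite inE; case: (A k).
  move=> ec; have : (0 < #|[set i | A i == ((A k).2, (A k).1)]|)%N.
    by rewrite -ec; apply/card_gt0P; exists k.
  case/card_gt0P => k' ; rewrite inE => /eqP ek'; exists k'; by rewrite ek'.
- move=> n A j _ x.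
  have E1 : forall k, repeat_alt A j (lift ord_max k) = A k.
    by move=> k; rewrite /repeat_alt liftK.
  have E2 : forall k', exists k, repeat_alt A j k' = A k.
    move=> k'; rewrite /repeat_alt; case: unliftP => [k _|_]; first by exists k.
    by exists j.
  split => /NEO_char H; apply/NEO_char; apply: transfer H.
  + by move=> k; exists (lift ord_max k).
  + exact: E2.
  + by move=> k'; have [k ek] := E2 k'; exists k.
  + by move=> k; exists (lift ord_max k); rewrite E1.
- move=> n A _.
  have [b1 [_ Hb1]] := exists_max (P := predT) (fun i => - (A i).1) (ex_intro _ ord0 isT).
  have [b2 [_ Hb2]] := exists_max (P := predT) (fun i => - (A i).2) (ex_intro _ ord0 isT).
  have {}Hb1 : forall j, (A b1).1 <= (A j).1 by move=> j; have := Hb1 j isT; lra.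
  have {}Hb2 : forall j, (A b2).2 <= (A j).2 by move=> j; have := Hb2 j isT; lra.
  pose goodb g := [forall a, ((A a).1 + (A b1).1 <= 2 * (A g).1) &&
                              ((A a).2 + (A b2).2 <= 2 * (A g).2)].
  case: (pickP goodb) => [g0 Hg0|none].
    have [g [Gg Mg]] := exists_max (fun i => (A i).1 + (A i).2) (ex_intro _ g0 Hg0).
    exists (A g); split.
      apply/NEO_char; left; exists g; split => //; exists b1, b2 => a.
      by move/forallP: Gg => /(_ a) /andP [].
    case=> k [h1 h2].
    have Gk : goodb k.
      apply/forallP => a; move/forallP: Gg => /(_ a) /andP [g1 g2].
      apply/andP; split; lra.
    have := Mg k Gk; lra.
  have [d1 [_ Hd1]] := exists_max (P := predT) (fun i => (A i).1) (ex_intro _ ord0 isT).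
  have [d2 [_ Hd2]] := exists_max (P := predT) (fun i => (A i).2) (ex_intro _ ord0 isT).
  have {}Hd1 : forall j, (A j).1 <= (A d1).1 by move=> j; exact: Hd1.
  have {}Hd2 : forall j, (A j).2 <= (A d2).2 by move=> j; exact: Hd2.
  have nd : d1 != d2.
    apply/negP => /eqP e; have := none d1; rewrite /goodb.
    move/negbT/negP; apply; apply/forallP => a; apply/andP; split.
      by have := Hd1 a; have := Hd1 b1; lra.
    by rewrite e; have := Hd2 a; have := Hd2 b2; lra.
  exists (((A d1).1 + (A d2).1)/2, ((A d1).2 + (A d2).2)/2); split.
    by apply/NEO_char; right; exists d1, d2.
  case=> k /= [h1 h2].
  have := none k; rewrite /goodb; move/negbT/negP; apply.
  apply/forallP => a; apply/andP; split.
    by have := Hd1 a; have := Hb1 d2; lra.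
  by have := Hd2 a; have := Hb2 d1; lra.
Qed.
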